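(* Let $\Gamma$ be an uncountable set and $Z=\ell_2(\Gamma)$. Let $\theta:\mathbb{R}\to[0,\infty)$, $\theta(t)=0$ for $t\le0$ and $\theta(t)=t^2$ for $t\ge0$, and define $f:Z\to\mathbb{R}$ by $f(x)=\sum_{\gamma\in\Gamma}\theta(x_\gamma)$. Then $f$ is a continuous convex function with $0\le f(x)\le\|x\|^2$, $f$ is not constant on any line $\{x+tv:t\in\mathbb{R}\}$ with $v\neq0$ (so that the subspace $Y_f=\{v\in Z: f(tv)-f(0)-\langle 0,tv\rangle=0\ \forall t\}$ equals $\{0\}$), and yet there is no continuous linear form $\ell:Z\to\mathbb{R}$ such that $f-\ell$ is directionally coercive.
   Context: $\ell_2(\Gamma)$ is the Hilbert space of all $x:\Gamma\to\mathbb{R}$, written $x=(x_\gamma)_{\gamma\in\Gamma}$, with $\sum_{\gamma\in\Gamma}|x_\gamma|^2<\infty$, norm $\|x\|=(\sum_\gamma|x_\gamma|^2)^{1/2}$ and inner product $\langle x,y\rangle=\sum_\gamma x_\gamma y_\gamma$. A function $g$ on $Z$ is directionally coercive if $\lim_{t\to\infty}g(x+tv)=\infty$ for all $x\in Z$, $v\in Z\setminus\{0\}$. *)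

(* Defs.v *)
From Stdlib Require Import Reals Lra List ClassicalEpsilon.
Open Scope R_scope.

Definition fsum {G : Type} (l : list G) (a : G -> R) : R :=
  fold_right (fun g acc => a g + acc) 0 l.

(* Unconditional summability over an arbitrary index set:
   the net of finite (duplicate-free) partial sums converges to s. *)
Definition has_sum {G : Type} (a : G -> R) (s : R) : Prop :=
  forall eps, 0 < eps ->
    exists F0 : list G, NoDup F0 /\
      forall F : list G, NoDup F -> incl F0 F -> Rabs (fsum F a - s) < eps.

(* The sum sum_{g in G} a g (meaningful when a is summable). *)
Definition tsum {G : Type} (a : G -> R) : R :=
  epsilon (inhabits 0) (fun s => has_sum a s).

Definition l2 {G : Type} (x : G -> R) : Prop :=
  exists s, has_sum (fun g => (x g) ^ 2) s.

Definition l2norm {G : Type} (x : G -> R) : R := sqrt (tsum (fun g => (x g) ^ 2)).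
Definition l2inner {G : Type} (x y : G -> R) : R := tsum (fun g => x g * y g).

Definition vzero {G : Type} : G -> R := fun _ => 0.
Definition vadd {G : Type} (x y : G -> R) : G -> R := fun g => x g + y g.
Definition vscal {G : Type} (c : R) (x : G -> R) : G -> R := fun g => c * x g.
Definition vsub {G : Type} (x y : G -> R) : G -> R := fun g => x g - y g.

Definition theta (t : R) : R := if Rle_dec t 0 then 0 else t ^ 2.

Definition fth {G : Type} (x : G -> R) : R := tsum (fun g => theta (x g)).

Definition l2_continuous {G : Type} (h : (G -> R) -> R) : Prop :=
  forall x, l2 x -> forall eps, 0 < eps -> exists delta, 0 < delta /\
    forall y, l2 y -> l2norm (vsub y x) < delta -> Rabs (h y - h x) < eps.

Definition l2_convex {G : Type} (h : (G -> R) -> R) : Prop :=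
  forall x y, l2 x -> l2 y -> forall lam, 0 <= lam <= 1 ->
    h (vadd (vscal lam x) (vscal (1 - lam) y)) <= lam * h x + (1 - lam) * h y.

Definition l2_linear {G : Type} (h : (G -> R) -> R) : Prop :=
  (forall x y, l2 x -> l2 y -> h (vadd x y) = h x + h y) /\
  (forall c x, l2 x -> h (vscal c x) = c * h x).

Definition l2_dir_coercive {G : Type} (h : (G -> R) -> R) : Prop :=
  forall x v, l2 x -> l2 v -> (exists g, v g <> 0) ->
    forall M, exists T, forall t, t >= T -> h (vadd x (vscal t v)) > M.

Definition uncountable (G : Type) : Prop :=
  ~ exists e : G -> nat, forall a b, e a = e b -> a = b.

(* Main.v *)
Require Import Defs.
From Stdlib Require Import Reals Lra List Permutation ClassicalEpsilon FunctionalExtensionality Lia Cantor.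
Open Scope R_scope.

Definition deq {G : Type} (x y : G) : {x = y} + {x <> y} := excluded_middle_informative (x = y).
Definition indec {G : Type} (g : G) (l : list G) : {In g l} + {~ In g l} := excluded_middle_informative (In g l).

Lemma fsum_nil {G} (a : G -> R) : fsum nil a = 0.
Proof. reflexivity. Qed.
Lemma fsum_cons {G} (g : G) l a : fsum (g :: l) a = a g + fsum l a.
Proof. reflexivity. Qed.

Lemma fsum_app {G} (l1 l2 : list G) a : fsum (l1 ++ l2) a = fsum l1 a + fsum l2 a.
Proof. induction l1; simpl; [lra|]. unfold fsum in *; simpl. rewrite IHl1. lra. Qed.

Lemma fsum_perm {G} (l1 l2 : list G) a : Permutation l1 l2 -> fsum l1 a = fsum l2 a.
Proof. intros H; induction H; unfold fsum in *; simpl; lra. Qed.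

Lemma fsum_le {G} (l : list G) a b : (forall g, In g l -> a g <= b g) -> fsum l a <= fsum l b.
Proof. induction l; intros H; unfold fsum in *; simpl; [lra|].
  assert (a a0 <= b a0) by (apply H; left; auto).
  assert (fold_right (fun g acc => a g + acc) 0 l <= fold_right (fun g acc => b g + acc) 0 l)
    by (apply IHl; intros; apply H; right; auto). lra. Qed.

Lemma fsum_nonneg {G} (l : list G) a : (forall g, 0 <= a g) -> 0 <= fsum l a.
Proof. intros H; induction l; unfold fsum in *; simpl; [lra|]. specialize (H a0); lra. Qed.

Lemma fsum_zero {G} (l : list G) a : (forall g, In g l -> a g = 0) -> fsum l a = 0.
Proof. induction l; intros H; unfold fsum in *; simpl; [lra|].
  rewrite H by (left; auto). rewrite IHl by (intros; apply H; right; auto). lra. Qed.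

Lemma fsum_plus {G} (l : list G) a b : fsum l (fun g => a g + b g) = fsum l a + fsum l b.
Proof. induction l; unfold fsum in *; simpl; [lra|]. rewrite IHl; lra. Qed.

Lemma fsum_scal {G} (l : list G) c a : fsum l (fun g => c * a g) = c * fsum l a.
Proof. induction l; unfold fsum in *; simpl; [lra|]. rewrite IHl; lra. Qed.

Lemma nodup_incl_perm {G} (l1 l2 : list G) : NoDup l1 -> NoDup l2 -> incl l1 l2 ->
  exists r, Permutation l2 (l1 ++ r) /\ NoDup (l1 ++ r).
Proof.
  revert l2; induction l1 as [|a l1 IH]; intros l2 N1 N2 I.
  - exists l2; split; simpl; auto.
  - assert (Ha : In a l2) by (apply I; left; auto).
    destruct (in_split a l2 Ha) as [p [q E]]; subst l2.
    inversion N1; subst.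
    destruct (NoDup_remove p q a N2) as [Npq Nin].
    destruct (IH (p ++ q) H2 Npq) as [r [P Nr]].
    { intros x Hx. assert (In x (p ++ a :: q)) by (apply I; right; auto).
      apply in_app_or in H. apply in_or_app. destruct H as [H|[H|H]]; auto.
      subst; contradiction. }
    exists r; split.
    + apply perm_trans with (a :: p ++ q). apply Permutation_sym; apply Permutation_middle.
      simpl. apply perm_skip; auto.
    + simpl. constructor; auto. intros Hin. apply Nin.
      apply (Permutation_in _ (Permutation_sym P)); auto.
Qed.

Lemma nodup_union {G} (F0 F : list G) : NoDup F0 -> NoDup F ->
  exists U, NoDup U /\ incl F0 U /\ incl F U.
Proof.
  intros N0 N; induction F as [|a F IH].
  - exists F0; split; [auto|split; [apply incl_refl| intros x []]].
  - inversion N; subst. destruct (IH H2) as [U [NU [I0 I1]]].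
    destruct (indec a U) as [Ha|Ha].
    + exists U; repeat split; auto. intros x [<-|Hx]; auto.
    + exists (a :: U); repeat split; auto.
      * constructor; auto.
      * intros x Hx; right; auto.
      * intros x [<-|Hx]; [left|right]; auto.
Qed.

Lemma fsum_mono {G} (F0 F : list G) a : (forall g, 0 <= a g) -> NoDup F0 -> NoDup F -> incl F0 F ->
  fsum F0 a <= fsum F a.
Proof.
  intros Ha N0 N I. destruct (nodup_incl_perm F0 F N0 N I) as [r [P _]].
  rewrite (fsum_perm _ _ a P), fsum_app. pose proof (fsum_nonneg r a Ha). lra.
Qed.

Lemma has_sum_unique {G} (a : G -> R) s t : has_sum a s -> has_sum a t -> s = t.
Proof.
  intros Hs Ht. destruct (Req_dec s t) as [|Hne]; auto. exfalso.
  assert (Hp : 0 < Rabs (s - t)) by (apply Rabs_pos_lt; lra).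
  destruct (Hs (Rabs (s - t) / 2)) as [F0 [N0 H0]]; [lra|].
  destruct (Ht (Rabs (s - t) / 2)) as [F1 [N1 H1]]; [lra|].
  destruct (nodup_union F0 F1 N0 N1) as [U [NU [I0 I1]]].
  specialize (H0 U NU I0). specialize (H1 U NU I1).
  pose proof (Rabs_triang (s - fsum U a) (fsum U a - t)).
  replace (s - fsum U a + (fsum U a - t)) with (s - t) in H by ring.
  rewrite Rabs_minus_sym in H0. lra.
Qed.

Lemma tsum_eq {G} (a : G -> R) s : has_sum a s -> tsum a = s.
Proof.
  intros H. unfold tsum. apply (has_sum_unique a); auto.
  apply (epsilon_spec (inhabits 0) (fun s => has_sum a s)). eauto.
Qed.

Lemma has_sum_plus {G} (a b : G -> R) s t : has_sum a s -> has_sum b t ->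
  has_sum (fun g => a g + b g) (s + t).
Proof.
  intros Ha Hb eps He.
  destruct (Ha (eps/2)) as [F0 [N0 H0]]; [lra|].
  destruct (Hb (eps/2)) as [F1 [N1 H1]]; [lra|].
  destruct (nodup_union F0 F1 N0 N1) as [U [NU [I0 I1]]].
  exists U; split; auto. intros F NF IU.
  specialize (H0 F NF (incl_tran I0 IU)). specialize (H1 F NF (incl_tran I1 IU)).
  rewrite fsum_plus.
  pose proof (Rabs_triang (fsum F a - s) (fsum F b - t)).
  replace (fsum F a - s + (fsum F b - t)) with (fsum F a + fsum F b - (s + t)) in H by ring.
  lra.
Qed.

Lemma has_sum_scal {G} (a : G -> R) s c : has_sum a s -> has_sum (fun g => c * a g) (c * s).
Proof.
  intros Ha eps He.
  destruct (Ha (eps / (Rabs c + 1))) as [F0 [N0 H0]].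
  { apply Rdiv_lt_0_compat; [lra|]. pose proof (Rabs_pos c); lra. }
  exists F0; split; auto. intros F NF I. specialize (H0 F NF I).
  rewrite fsum_scal. replace (c * fsum F a - c * s) with (c * (fsum F a - s)) by ring.
  rewrite Rabs_mult.
  pose proof (Rabs_pos c). pose proof (Rabs_pos (fsum F a - s)).
  assert (Rabs (fsum F a - s) * (Rabs c + 1) < eps).
  { apply (Rmult_lt_compat_r (Rabs c + 1)) in H0; [|lra].
    unfold Rdiv in H0. rewrite Rmult_assoc, Rinv_l in H0; lra. }
  nra.
Qed.

Lemma has_sum_nonneg_bound {G} (a : G -> R) s F : (forall g, 0 <= a g) -> has_sum a s -> NoDup F ->
  fsum F a <= s.
Proof.
  intros Hp Ha NF. apply Rnot_lt_le; intro Hl.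
  destruct (Ha (fsum F a - s)) as [F0 [N0 H0]]; [lra|].
  destruct (nodup_union F0 F N0 NF) as [U [NU [I0 I1]]].
  specialize (H0 U NU I0). pose proof (fsum_mono F U a Hp NF NU I1).
  pose proof (Rle_abs (fsum U a - s)). lra.
Qed.

Lemma has_sum_nonneg {G} (a : G -> R) s : (forall g, 0 <= a g) -> has_sum a s -> 0 <= s.
Proof. intros Hp Ha. apply (has_sum_nonneg_bound a s nil Hp Ha). constructor. Qed.

Lemma has_sum_single {G} (a : G -> R) s g : (forall g, 0 <= a g) -> has_sum a s -> a g <= s.
Proof. intros Hp Ha. pose proof (has_sum_nonneg_bound a s (g :: nil) Hp Ha).
  unfold fsum in H; simpl in H. assert (NoDup (g :: nil)) by (repeat constructor; auto).
  specialize (H H0). lra. Qed.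

Lemma bounded_summable {G} (a : G -> R) B : (forall g, 0 <= a g) ->
  (forall F, NoDup F -> fsum F a <= B) -> exists s, has_sum a s.
Proof.
  intros Hp HB.
  set (E := fun r => exists F, NoDup F /\ r = fsum F a).
  assert (bE : bound E) by (exists B; intros r [F [NF ->]]; auto).
  assert (nE : exists x, E x) by (exists 0; exists nil; split; [constructor|reflexivity]).
  destruct (completeness E bE nE) as [m [Hub Hlub]].
  exists m. intros eps He.
  assert (exists F, NoDup F /\ m - eps < fsum F a) as [F0 [N0 H0]].
  { apply Classical_Prop.NNPP; intro Hn.
    assert (m <= m - eps); [|lra].
    apply Hlub. intros r [F [NF ->]]. apply Rnot_lt_le. intro. apply Hn. eauto. }
  exists F0; split; auto. intros F NF I.
  pose proof (fsum_mono F0 F a Hp N0 NF I).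
  assert (fsum F a <= m) by (apply Hub; exists F; auto).
  apply Rabs_def1; lra.
Qed.

Lemma comparison {G} (a b : G -> R) : (forall g, 0 <= b g <= a g) ->
  (exists s, has_sum a s) -> exists t, has_sum b t.
Proof.
  intros Hb [s Hs]. apply (bounded_summable b s).
  - intro g; apply Hb.
  - intros F NF. apply Rle_trans with (fsum F a).
    + apply fsum_le; intros; apply Hb.
    + apply has_sum_nonneg_bound; auto. intro g; pose proof (Hb g); lra.
Qed.

Lemma has_sum_le {G} (a b : G -> R) s t : (forall g, a g <= b g) -> has_sum a s -> has_sum b t -> s <= t.
Proof.
  intros Hab Ha Hb. apply Rnot_lt_le; intro Hl.
  destruct (Ha ((s - t)/2)) as [F0 [N0 H0]]; [lra|].
  destruct (Hb ((s - t)/2)) as [F1 [N1 H1]]; [lra|].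
  destruct (nodup_union F0 F1 N0 N1) as [U [NU [I0 I1]]].
  specialize (H0 U NU I0). specialize (H1 U NU I1).
  pose proof (fsum_le U a b (fun g _ => Hab g)).
  apply Rabs_def2 in H0. apply Rabs_def2 in H1. lra.
Qed.

Lemma has_sum_abs_le {G} (d c : G -> R) sd sc : (forall g, Rabs (d g) <= c g) ->
  has_sum d sd -> has_sum c sc -> Rabs sd <= sc.
Proof.
  intros H Hd Hc. apply Rabs_le. split.
  - pose proof (has_sum_scal c sc (-1) Hc).
    assert (- sc = -1 * sc) by ring. rewrite H1.
    apply (has_sum_le (fun g => -1 * c g) d); auto.
    intro g; specialize (H g). pose proof (Rle_abs (- d g)). rewrite Rabs_Ropp in H2. lra.
  - apply (has_sum_le d c); auto. intro g; specialize (H g). pose proof (Rle_abs (d g)); lra.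
Qed.

Lemma has_sum_finite {G} (a : G -> R) L : NoDup L -> (forall g, ~ In g L -> a g = 0) ->
  has_sum a (fsum L a).
Proof.
  intros NL Hz eps He. exists L; split; auto. intros F NF I.
  destruct (nodup_incl_perm L F NL NF I) as [r [P Nr]].
  rewrite (fsum_perm _ _ a P), fsum_app.
  rewrite (fsum_zero r a).
  - rewrite Rplus_0_r, Rminus_diag, Rabs_R0; lra.
  - intros g Hg. apply Hz. intro HL.
    apply NoDup_app_remove_l in Nr as Nr'. 
    destruct (in_split g L HL) as [p [q E]]. subst L.
    rewrite <- app_assoc in Nr. simpl in Nr.
    apply (NoDup_remove_2 p (q ++ r) g Nr). apply in_or_app; right; apply in_or_app; right; auto.
Qed.

Lemma l2_lin {G} (x y : G -> R) a b : l2 x -> l2 y -> l2 (fun g => a * x g + b * y g).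
Proof.
  intros [s Hs] [t Ht]. unfold l2.
  apply (comparison (fun g => (2 * a^2) * x g ^ 2 + (2 * b^2) * y g ^ 2)).
  - intro g. split; [apply pow2_ge_0|].
    pose proof (pow2_ge_0 (a * x g - b * y g)). nra.
  - eexists. apply has_sum_plus; apply has_sum_scal; eauto.
Qed.

Lemma l2_vadd {G} (x y : G -> R) : l2 x -> l2 y -> l2 (vadd x y).
Proof. intros. replace (vadd x y) with (fun g => 1 * x g + 1 * y g).
  apply l2_lin; auto. apply functional_extensionality; intro; unfold vadd; ring. Qed.
Lemma l2_vsub {G} (x y : G -> R) : l2 x -> l2 y -> l2 (vsub x y).
Proof. intros. replace (vsub x y) with (fun g => 1 * x g + (-1) * y g).
  apply l2_lin; auto. apply functional_extensionality; intro; unfold vsub; ring. Qed.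
Lemma l2_vscal {G} (x : G -> R) c : l2 x -> l2 (vscal c x).
Proof. intros. replace (vscal c x) with (fun g => c * x g + 0 * x g).
  apply l2_lin; auto. apply functional_extensionality; intro; unfold vscal; ring. Qed.
Lemma has_sum_zero {G} (a : G -> R) : (forall g, a g = 0) -> has_sum a 0.
Proof. intros Ha eps He. exists nil; split; [constructor|]. intros F _ _.
  rewrite fsum_zero; [rewrite Rminus_0_r, Rabs_R0; lra|]. intros; auto. Qed.
Lemma l2_vzero {G} : l2 (@vzero G).
Proof. exists 0. apply has_sum_zero. intros; unfold vzero; ring. Qed.

Lemma theta_nonneg t : 0 <= theta t.
Proof. unfold theta; destruct (Rle_dec t 0); [lra|apply pow2_ge_0]. Qed.
Lemma theta_le t : theta t <= t ^ 2.
Proof. unfold theta; destruct (Rle_dec t 0); [apply pow2_ge_0|lra]. Qed.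
Lemma theta_pos t : 0 < t -> theta t = t ^ 2.
Proof. unfold theta; destruct (Rle_dec t 0); [lra|auto]. Qed.
Lemma theta_npos t : t <= 0 -> theta t = 0.
Proof. unfold theta; destruct (Rle_dec t 0); [auto|lra]. Qed.

Lemma theta_convex a b lam : 0 <= lam <= 1 ->
  theta (lam * a + (1 - lam) * b) <= lam * theta a + (1 - lam) * theta b.
Proof.
  intros Hl. unfold theta.
  assert (H1 : 0 <= lam * (1 - lam)) by nra.
  pose proof (pow2_ge_0 a). pose proof (pow2_ge_0 b). pose proof (pow2_ge_0 (a - b)).
  destruct (Rle_dec (lam * a + (1 - lam) * b) 0);
  destruct (Rle_dec a 0); destruct (Rle_dec b 0); try nra.
  - assert (0 < lam * a + (1 - lam) * b <= (1 - lam) * b) by nra.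
    assert ((lam * a + (1 - lam) * b)^2 <= ((1 - lam) * b)^2) by (apply pow_incrst_1 || nra).
    nra.
  - assert (0 < lam * a + (1 - lam) * b <= lam * a) by nra.
    assert ((lam * a + (1 - lam) * b)^2 <= (lam * a)^2) by nra.
    nra.
Qed.

Lemma theta_diff a b c : 0 < c -> Rabs (theta a - theta b) <= (1 + / c) * (a - b) ^ 2 + c * b ^ 2.
Proof.
  intros Hc. assert (Hq : 0 <= (1 + /c) * (a - b) ^ 2 + c * b ^ 2 - ((a-b)^2 + 2 * Rabs b * Rabs (a - b))).
  { assert (0 < / c) by (apply Rinv_0_lt_compat; lra).
    assert (/ c * (a - b)^2 + c * b^2 - 2 * Rabs b * Rabs (a-b) = / c * (Rabs (a-b) - c * Rabs b)^2).
    { replace ((a-b)^2) with (Rabs (a-b) ^2) by (rewrite <- Rsqr_pow2, <- Rsqr_abs; rewrite Rsqr_pow2; auto).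
      replace (b^2) with (Rabs b ^2) by (rewrite <- Rsqr_pow2, <- Rsqr_abs; rewrite Rsqr_pow2; auto).
      field. lra. }
    pose proof (pow2_ge_0 (Rabs (a - b) - c * Rabs b)). nra. }
  assert (Rabs (theta a - theta b) <= (a-b)^2 + 2 * Rabs b * Rabs (a - b)); [|lra].
  unfold theta. destruct (Rle_dec a 0); destruct (Rle_dec b 0);
  unfold Rabs; repeat (destruct Rcase_abs); nra.
Qed.

Lemma theta_summable {G} (x : G -> R) : l2 x -> exists s, has_sum (fun g => theta (x g)) s.
Proof. intros Hx. apply (comparison (fun g => x g ^ 2)); auto.
  intro g; split; [apply theta_nonneg|apply theta_le]. Qed.

Lemma sqrt_sq x : 0 <= x -> sqrt x ^ 2 = x.
Proof. intros H. pose proof (Rsqr_sqrt x H). unfold Rsqr in H0. simpl. lra. Qed.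

Lemma fth_eq {G} (x : G -> R) s : has_sum (fun g => theta (x g)) s -> fth x = s.
Proof. apply tsum_eq. Qed.

Lemma l2_norm_sq {G} (x : G -> R) s : has_sum (fun g => x g ^ 2) s -> l2norm x ^ 2 = s /\ 0 <= s.
Proof. intros H. assert (0 <= s) by (apply (has_sum_nonneg _ _ (fun g => pow2_ge_0 _) H)).
  unfold l2norm. rewrite (tsum_eq _ _ H). split; auto. apply sqrt_sq; auto. Qed.

Lemma partD {G} (x : G -> R) : l2 x -> 0 <= fth x <= (l2norm x) ^ 2.
Proof.
  intros Hx. destruct (theta_summable x Hx) as [t Ht]. destruct Hx as [s Hs].
  rewrite (fth_eq x t Ht). destruct (l2_norm_sq x s Hs) as [-> _]. split.
  - apply (has_sum_nonneg _ _ (fun g => theta_nonneg _) Ht).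
  - apply (has_sum_le _ _ t s (fun g => theta_le _) Ht Hs).
Qed.

Lemma partC {G} : l2_convex (@fth G).
Proof.
  intros x y Hx Hy lam Hl.
  set (z := vadd (vscal lam x) (vscal (1 - lam) y)).
  assert (Hz : l2 z) by (apply l2_vadd; apply l2_vscal; auto).
  destruct (theta_summable x Hx) as [tx Htx].
  destruct (theta_summable y Hy) as [ty Hty].
  destruct (theta_summable z Hz) as [tz Htz].
  rewrite (fth_eq x tx Htx), (fth_eq y ty Hty), (fth_eq z tz Htz).
  apply (has_sum_le _ _ tz _ (fun g => theta_convex (x g) (y g) lam Hl) Htz).
  apply has_sum_plus; apply has_sum_scal; auto.
Qed.

Lemma line_grow {G} (x v : G -> R) g : l2 x -> l2 v -> v g <> 0 ->
  exists t, fth (vadd x (vscal t v)) > fth x.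
Proof.
  intros Hx Hv Hg. set (F := fth x).
  assert (HF : 0 <= F) by (apply (partD x Hx)).
  exists ((sqrt F + 1 - x g) / v g).
  set (w := vadd x (vscal ((sqrt F + 1 - x g) / v g) v)).
  assert (Hw : l2 w) by (apply l2_vadd; [|apply l2_vscal]; auto).
  destruct (theta_summable w Hw) as [tw Htw]. rewrite (fth_eq w tw Htw).
  pose proof (has_sum_single _ tw g (fun g => theta_nonneg _) Htw) as Hs.
  assert (Ew : w g = sqrt F + 1) by (unfold w, vadd, vscal; field; auto).
  cbv beta in Hs. rewrite Ew in Hs. pose proof (sqrt_pos F).
  rewrite theta_pos in Hs by lra. pose proof (sqrt_sq F HF). nra.
Qed.

Lemma partE {G} (x v : G -> R) : l2 x -> l2 v -> (exists g, v g <> 0) ->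
     ~ (forall t, fth (vadd x (vscal t v)) = fth x).
Proof. intros Hx Hv [g Hg] H. destruct (line_grow x v g Hx Hv Hg) as [t Ht].
  rewrite H in Ht. lra. Qed.

Lemma fth_zero_fam {G} (x : G -> R) : (forall g, x g <= 0) -> fth x = 0.
Proof. intros H. apply fth_eq. apply has_sum_zero. intros; apply theta_npos; auto. Qed.

Lemma partF {G} (v : G -> R) : l2 v ->
     ((forall t, fth (vscal t v) - fth (@vzero G) - l2inner (@vzero G) (vscal t v) = 0)
      <-> (forall g, v g = 0)).
Proof.
  intros Hv.
  assert (E0 : fth (@vzero G) = 0) by (apply fth_zero_fam; intros; unfold vzero; lra).
  assert (E1 : forall t, l2inner (@vzero G) (vscal t v) = 0).
  { intros t. unfold l2inner. apply tsum_eq. apply has_sum_zero. intros; unfold vzero; ring. }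
  split.
  - intros H g. destruct (Req_dec (v g) 0) as [|Hg]; auto. exfalso.
    destruct (line_grow vzero v g l2_vzero Hv Hg) as [t Ht].
    specialize (H t). rewrite E0, E1 in H.
    replace (vadd vzero (vscal t v)) with (vscal t v) in Ht.
    2:{ apply functional_extensionality; intro; unfold vadd, vzero; ring. }
    rewrite E0 in Ht. lra.
  - intros H t. rewrite E0, E1. rewrite fth_zero_fam. ring.
    intros g; unfold vscal; rewrite H; lra.
Qed.

Lemma partB {G} : l2_continuous (@fth G).
Proof.
  intros x Hx eps He.
  destruct Hx as [X HX]. pose proof (has_sum_nonneg _ _ (fun g => pow2_ge_0 _) HX) as HX0.
  set (c := eps / (4 * (X + 1))).
  assert (Hc : 0 < c) by (unfold c; apply Rdiv_lt_0_compat; lra).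
  set (d := Rmin 1 (eps * c / (4 * (c + 1)))).
  assert (Hd1 : 0 < eps * c / (4 * (c + 1))) by (apply Rdiv_lt_0_compat; nra).
  exists d. split; [unfold d; apply Rmin_glb_lt; lra|].
  intros y Hy Hn.
  assert (Hx : l2 x) by (exists X; auto).
  destruct (l2_vsub y x Hy Hx) as [D HD].
  pose proof (has_sum_nonneg _ _ (fun g => pow2_ge_0 _) HD) as HD0.
  assert (ED : l2norm (vsub y x) = sqrt D) by (unfold l2norm; rewrite (tsum_eq _ _ HD); auto).
  rewrite ED in Hn.
  assert (Hdd : d <= 1) by apply Rmin_l.
  assert (Hde : d <= eps * c / (4 * (c + 1))) by apply Rmin_r.
  assert (HDd : D <= d).
  { pose proof (sqrt_pos D). pose proof (sqrt_sq D HD0). nra. }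
  destruct (theta_summable y Hy) as [ty Hty].
  destruct (theta_summable x Hx) as [tx Htx].
  rewrite (fth_eq y ty Hty), (fth_eq x tx Htx).
  assert (Hb : Rabs (ty + -1 * tx) <= (1 + / c) * D + c * X).
  { apply (has_sum_abs_le (fun g => theta (y g) + -1 * theta (x g))
             (fun g => (1 + / c) * (vsub y x g) ^ 2 + c * x g ^ 2)).
    - intro g. unfold vsub. replace (theta (y g) + -1 * theta (x g)) with (theta (y g) - theta (x g)) by ring.
      apply theta_diff; auto.
    - apply has_sum_plus; auto. apply has_sum_scal; auto.
    - apply has_sum_plus; apply has_sum_scal; auto. }
  replace (ty - tx) with (ty + -1 * tx) by ring.
  assert (H1 : c * X < eps / 4).
  { unfold c. unfold Rdiv. rewrite Rinv_mult.
    assert (0 < / (X + 1)) by (apply Rinv_0_lt_compat; lra).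
    assert (X * / (X + 1) < 1).
    { apply (Rmult_lt_reg_r (X + 1)); [lra|]. rewrite Rmult_assoc, Rinv_l; lra. }
    assert (0 < / 4) by lra. nra. }
  assert (H2 : (1 + / c) * D <= eps / 4).
  { assert (0 < / c) by (apply Rinv_0_lt_compat; lra).
    apply Rle_trans with ((1 + / c) * (eps * c / (4 * (c + 1)))).
    - apply Rmult_le_compat_l; lra.
    - right. field. lra. }
  lra.
Qed.

Lemma fsum_const {G} (L : list G) c : fsum L (fun _ => c) = INR (length L) * c.
Proof. induction L; unfold fsum in *; simpl; [ring|]. rewrite IHL.
  destruct (length L); simpl; ring. Qed.

Lemma fsum_ext_in {G} (L : list G) a b : (forall g, In g L -> a g = b g) -> fsum L a = fsum L b.
Proof. induction L; intros H; unfold fsum in *; simpl; auto.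
  rewrite H by (left; auto). rewrite IHL; auto. intros; apply H; right; auto. Qed.

Lemma exists_big_nat B : exists m : nat, B < INR m.
Proof.
  destruct (Rle_or_lt B 0) as [H|H]. { exists 1%nat; simpl; lra. }
  destruct (archimed_cor1 (/ (B + 1))) as [N [HN HN0]].
  { apply Rinv_0_lt_compat; lra. }
  exists N. destruct (Rlt_or_le B (INR N)) as [|Hle]; auto. exfalso.
  assert (0 < INR N) by (apply lt_0_INR; auto).
  assert (/ (B + 1) < / INR N) by (apply Rinv_lt_contravar; nra).
  lra.
Qed.

Lemma enum_finite {G} (P : G -> Prop) B :
  (forall L, NoDup L -> (forall g, In g L -> P g) -> INR (length L) <= B) ->
  exists L, NoDup L /\ forall g, P g -> In g L.
Proof.
  intros HB.
  assert (Hm : forall m, exists L, NoDup L /\ (forall g, In g L -> P g) /\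
             ((forall g, P g -> In g L) \/ (m <= length L)%nat)).
  { induction m.
    - exists nil; repeat split; [constructor| intros g []| right; lia].
    - destruct IHm as [L [NL [PL [C|Lm]]]].
      + exists L; repeat split; auto.
      + destruct (Classical_Prop.classic (forall g, P g -> In g L)) as [C|C].
        * exists L; repeat split; auto.
        * apply Classical_Pred_Type.not_all_ex_not in C. destruct C as [g Hg].
          apply Classical_Prop.imply_to_and in Hg. destruct Hg as [Pg Ng].
          exists (g :: L); repeat split.
          -- constructor; auto.
          -- intros h [<-|Hh]; auto.
          -- right; simpl; lia. }
  destruct (exists_big_nat B) as [m Hm'].
  destruct (Hm m) as [L [NL [PL [C|Lm]]]].
  - exists L; auto.
  - exfalso. specialize (HB L NL PL). apply le_INR in Lm. lra.
Qed.

Fixpoint pos {G} (g : G) (L : list G) : nat :=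
  match L with nil => 0%nat | a :: L' => if deq a g then 0%nat else S (pos g L') end.

Lemma pos_spec {G} (g : G) L : In g L -> (pos g L < length L)%nat /\ nth (pos g L) L g = g.
Proof.
  induction L as [|a L IH]; intros H; [destruct H|]. simpl.
  destruct (deq a g) as [E|E]; [split; [lia|auto]|].
  destruct H as [H|H]; [contradiction|]. destruct (IH H). split; [lia|auto].
Qed.

Definition uvec {G} (L : list G) : G -> R := fun g => if indec g L then -1 else 0.

Lemma uvec_l2 {G} (L : list G) : NoDup L -> l2 (uvec L).
Proof. intros N. exists (fsum L (fun g => uvec L g ^ 2)). apply has_sum_finite; auto.
  intros g Hg. unfold uvec. destruct (indec g L); [contradiction|ring]. Qed.

Lemma uvec_cons {G} (a : G) L : ~ In a L -> uvec (a :: L) = vadd (uvec (a :: nil)) (uvec L).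
Proof.
  intros Ha. apply functional_extensionality; intro g. unfold vadd, uvec.
  destruct (indec g (a :: L)) as [H1|H1]; destruct (indec g (a :: nil)) as [H2|H2];
  destruct (indec g L) as [H3|H3]; simpl in *; try ring; exfalso;
  intuition (subst; auto).
Qed.

Lemma uvec_nil {G} : uvec (@nil G) = vzero.
Proof. apply functional_extensionality; intro g. unfold uvec, vzero.
  destruct (indec g nil) as [[]|]; auto. Qed.

Lemma partG {G} (HG : uncountable G) :
  ~ (exists l : (G -> R) -> R,
       l2_linear l /\ l2_continuous l /\ l2_dir_coercive (fun x => fth x - l x)).
Proof.
  intros [l [[Hadd Hsc] [Hc Hco]]].
  assert (l0 : l vzero = 0).
  { replace (@vzero G) with (vscal 0 (@vzero G)) at 1.
    - rewrite Hsc by apply l2_vzero. ring.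
    - apply functional_extensionality; intro; unfold vscal, vzero; ring. }
  set (u := fun g : G => uvec (g :: nil)).
  assert (Hu2 : forall g, l2 (u g)) by (intros; apply uvec_l2; repeat constructor; auto).
  assert (Step1 : forall g, l (u g) < 0).
  { intros g.
    assert (Hne : exists h, u g h <> 0).
    { exists g. unfold u, uvec. destruct (indec g (g :: nil)) as [|n]; [lra|].
      exfalso; apply n; left; auto. }
    destruct (Hco vzero (u g) l2_vzero (Hu2 g) Hne 0) as [T HT].
    set (t := Rmax T 1). specialize (HT t (Rle_ge _ _ (Rmax_l T 1))).
    assert (Ht1 : 1 <= t) by apply Rmax_r.
    rewrite fth_zero_fam in HT.
    2:{ intros h. unfold vadd, vzero, vscal, u, uvec. destruct (indec h (g :: nil)); nra. }
    rewrite Hadd, Hsc, l0 in HT by (try apply l2_vscal; try apply l2_vzero; auto).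
    nra. }
  destruct (Hc vzero l2_vzero 1 Rlt_0_1) as [d [Hd Hdl]].
  rewrite l0 in Hdl.
  assert (Lsum : forall L, NoDup L -> l (uvec L) = fsum L (fun g => l (u g))).
  { induction L as [|a L IH]; intros N.
    - rewrite uvec_nil, l0; reflexivity.
    - inversion N; subst. rewrite uvec_cons by auto.
      rewrite Hadd; [|apply uvec_l2; repeat constructor; auto|apply uvec_l2; auto].
      rewrite IH by auto. reflexivity. }
  assert (Norm : forall (L : list G) s, NoDup L ->
     l2norm (vsub (vscal s (uvec L)) vzero) = sqrt (INR (length L) * s ^ 2)).
  { intros L s N. unfold l2norm. f_equal. apply tsum_eq.
    rewrite <- (fsum_const L).
    replace (fsum L (fun _ => s ^ 2)) with (fsum L (fun g => vsub (vscal s (uvec L)) vzero g ^ 2)).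
    - apply has_sum_finite; auto. intros g Hg. unfold vsub, vscal, vzero, uvec.
      destruct (indec g L); [contradiction|ring].
    - apply fsum_ext_in. intros g Hg. unfold vsub, vscal, vzero, uvec.
      destruct (indec g L); [ring|contradiction]. }
  set (P := fun (n : nat) g => (0 < n)%nat /\ l (u g) < - / INR n).
  assert (Bound : forall n (L : list G), NoDup L -> (forall g, In g L -> P n g) ->
            INR (length L) <= INR n ^ 2 / d ^ 2).
  { intros n L N HP. set (k := INR (length L)).
    destruct (Rle_or_lt k (INR n ^ 2 / d ^ 2)) as [|Hk]; auto. exfalso.
    assert (Hk0 : 0 < k).
    { apply Rle_lt_trans with (INR n ^ 2 / d ^ 2); auto.
      apply Rmult_le_pos; [apply pow2_ge_0|]. left; apply Rinv_0_lt_compat; nra. }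
    destruct L as [|g0 L0]. { unfold k in Hk0; simpl in Hk0; lra. }
    assert (Hn : (0 < n)%nat) by (apply (HP g0); left; auto).
    assert (Hn' : 0 < INR n) by (apply lt_0_INR; auto).
    set (L := g0 :: L0) in *.
    set (s := INR n / k).
    assert (Hs : 0 < s) by (unfold s; apply Rdiv_lt_0_compat; auto).
    specialize (Hdl (vscal s (uvec L)) (l2_vscal _ _ (uvec_l2 _ N))).
    rewrite Norm in Hdl by auto. fold k in Hdl.
    assert (Hlt : sqrt (k * s ^ 2) < d).
    { rewrite <- (sqrt_pow2 d) by lra. apply sqrt_lt_1_alt. split.
      - apply Rmult_le_pos; [lra|apply pow2_ge_0].
      - assert (k * s ^ 2 = INR n ^ 2 / k) by (unfold s; field; lra). rewrite H.
        assert (INR n ^ 2 < k * d ^ 2).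
        { apply (Rmult_lt_compat_r (d ^ 2)) in Hk; [|nra].
          unfold Rdiv in Hk. rewrite Rmult_assoc, Rinv_l in Hk by nra. lra. }
        apply (Rmult_lt_reg_r k); auto. unfold Rdiv. rewrite Rmult_assoc, Rinv_l by lra. lra. }
    specialize (Hdl Hlt).
    rewrite Hsc in Hdl by (apply uvec_l2; auto). rewrite Lsum in Hdl by auto.
    assert (fsum L (fun g => l (u g)) <= fsum L (fun _ => - / INR n)).
    { apply fsum_le. intros g Hg. left; apply (HP g Hg). }
    rewrite fsum_const in H. fold k in H.
    assert (s * fsum L (fun g => l (u g)) <= s * (k * - / INR n)) by (apply Rmult_le_compat_l; lra).
    assert (s * (k * - / INR n) = -1) by (unfold s; field; lra).
    rewrite Rminus_0_r in Hdl. apply Rabs_def2 in Hdl. lra. }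
  assert (HN : forall g, exists n, P n g).
  { intros g. destruct (archimed_cor1 (- l (u g))) as [N [H1 H2]].
    { specialize (Step1 g); lra. }
    exists N; split; auto. lra. }
  assert (HL : forall n, exists L, NoDup L /\ forall g, P n g -> In g L).
  { intros n. apply (enum_finite (P n) (INR n ^ 2 / d ^ 2)). intros; apply Bound; auto. }
  set (Nf := fun g => proj1_sig (constructive_indefinite_description _ (HN g))).
  set (Lf := fun n => proj1_sig (constructive_indefinite_description _ (HL n))).
  assert (HNf : forall g, P (Nf g) g) by (intros; unfold Nf; apply proj2_sig).
  assert (HLf : forall n g, P n g -> In g (Lf n))
    by (intros n; unfold Lf; destruct (proj2_sig (constructive_indefinite_description _ (HL n))); auto).
  apply HG. exists (fun g => Cantor.to_nat (Nf g, pos g (Lf (Nf g)))).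
  intros a b E. apply (f_equal Cantor.of_nat) in E. rewrite !Cantor.cancel_of_to in E.
  inversion E as [[E1 E2]].
  pose proof (pos_spec a (Lf (Nf a)) (HLf _ _ (HNf a))) as [Ha1 Ha2].
  pose proof (pos_spec b (Lf (Nf b)) (HLf _ _ (HNf b))) as [Hb1 Hb2].
  rewrite <- E1, <- E2 in Hb2. rewrite <- Hb2, <- Ha2 at 1.
  apply nth_indep. auto.
Qed.

Theorem mainTheorem9 (G : Type) (HG : uncountable G) :
  (* f is well defined on Z *)
  (forall x : G -> R, l2 x -> exists s, has_sum (fun g => theta (x g)) s) /\
  l2_continuous (@fth G) /\
  l2_convex (@fth G) /\
  (forall x : G -> R, l2 x -> 0 <= fth x <= (l2norm x) ^ 2) /\
  (* f is not constant on any line x + R v, v <> 0 *)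
  (forall x v : G -> R, l2 x -> l2 v -> (exists g, v g <> 0) ->
     ~ (forall t, fth (vadd x (vscal t v)) = fth x)) /\
  (* Y_f = {0} *)
  (forall v : G -> R, l2 v ->
     ((forall t, fth (vscal t v) - fth (@vzero G) - l2inner (@vzero G) (vscal t v) = 0)
      <-> (forall g, v g = 0))) /\
  (* no continuous linear form l with f - l directionally coercive *)
  ~ (exists l : (G -> R) -> R,
       l2_linear l /\ l2_continuous l /\ l2_dir_coercive (fun x => fth x - l x)).
Proof.
  split; [exact theta_summable|].
  split; [exact partB|].
  split; [exact partC|].
  split; [exact partD|].
  split; [exact partE|].
  split; [exact partF|].
  exact (partG HG).
Qed.
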